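(* Let $F:(\mathbb R^n\times\mathbb R,0)\to(\mathbb R^m,0)$, $n\ge m\ge 2$, $F=(f_1,\dots,f_m)$, be an analytic germ satisfying: there exists $0<\theta<1$ such that for every $x_0\in F_0^{-1}(0)\cap\operatorname{Sing}F_0\setminus\{0\}$ there is $c(x_0)>0$ with $\|F(x,t)\|^\theta\le c(x_0)\nu_{F_t}(x)$ for all $(x,t)\notin\operatorname{Sing}\widetilde F$ close enough to $(x_0,0)$. Let $L\in\mathbb N$ with $\theta<\frac{L-1}{L}$, let $X=\{(x,t,s)\in\mathbb R^n\times\mathbb R\times\mathbb R^m: f_i(x,t)=s_i^L,\ i=1,\dots,m\}$ and $\pi:X\to\mathbb R$, $\pi(x,t,s)=t$. Let $x_0\in F_0^{-1}(0)\cap\operatorname{Sing}F_0\setminus\{0\}$ and let $(x_k,t_k,s_k)\in X$ be a sequence with $(x_k,t_k)\notin\operatorname{Sing}\widetilde F$, $(x_k,t_k,s_k)\to(x_0,0,0)$, such that the $n$-dimensional tangent spaces $T_{(x_k,t_k,s_k)}(\pi^{-1}(t_k)\cap X)$ converge in the Grassmannian to a space $T$. Then $T=A\times\{0\}\times\mathbb R^m\subset\mathbb R^n\times\mathbb R\times\mathbb R^m$ for some linear subspace $A\subset\mathbb R^n$ of dimension $n-m$.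
   Context: $F_t=F(\cdot,t)$, $F_0=F(\cdot,0)$, $\widetilde F(x,t)=(F(x,t),t)$. $\nu_{F_t}(x):=\min_{\|a\|=1}\bigl\|\sum_{i=1}^m a_i\operatorname{grad}_x f_i(x,t)\bigr\|$ with $\operatorname{grad}_x f_i=(\partial f_i/\partial x_1,\dots,\partial f_i/\partial x_n)$. $\operatorname{Sing}$ of a map denotes the set where its Jacobian has rank less than the target dimension; note $(x,t)\notin\operatorname{Sing}\widetilde F$ iff $\nu_{F_t}(x)>0$, so near such points $\pi^{-1}(t)\cap X$ is a smooth $n$-dimensional manifold. *)

(* Defs.v *)
From HB Require Import structures.
From mathcomp Require Import all_boot all_order all_algebra.
From mathcomp Require Import all_classical all_reals all_analysis.
Set Implicit Arguments. Unset Strict Implicit. Unset Printing Implicit Defensive.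
Import Order.TTheory GRing.Theory Num.Theory.
Import numFieldNormedType.Exports.
Local Open Scope classical_set_scope.
Local Open Scope ring_scope.

Section Defs.
Variable R : realType.

Definition enorm (N : nat) (v : 'rV[R]_N) : R := Num.sqrt (\sum_i v 0 i ^+ 2).

Definition pseries_partial (N : nat) (c : ('I_N -> nat) -> R) (a x : 'rV[R]_N)
    (d : nat) : R :=
  \sum_(al : {ffun 'I_N -> 'I_d.+1} | (\sum_i (al i : nat) <= d)%N)
     c (fun i => (al i : nat)) * \prod_i (x 0 i - a 0 i) ^+ (al i).

Definition pseries_abs_partial (N : nat) (c : ('I_N -> nat) -> R) (a x : 'rV[R]_N)
    (d : nat) : R :=
  \sum_(al : {ffun 'I_N -> 'I_d.+1} | (\sum_i (al i : nat) <= d)%N)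
     `|c (fun i => (al i : nat))| * \prod_i `|x 0 i - a 0 i| ^+ (al i).

Definition analytic_at (N : nat) (g : 'rV[R]_N -> R) (a : 'rV[R]_N) : Prop :=
  exists r : R, 0 < r /\ exists c : ('I_N -> nat) -> R,
    forall x, enorm (x - a) < r ->
      (exists M : R, forall d, pseries_abs_partial c a x d <= M) /\
      (pseries_partial c a x @ \oo --> g x).

Definition analytic_on (N : nat) (U : set 'rV[R]_N) (g : 'rV[R]_N -> R) : Prop :=
  forall a, U a -> analytic_at g a.

Definition xt (n : nat) (x : 'rV[R]_n) (t : R) : 'rV[R]_(n + 1) := row_mx x t%:M.

Section Map.
Variables (n m : nat) (F : 'rV[R]_n -> R -> 'rV[R]_m).

Definition JxF (t : R) (x : 'rV[R]_n) : 'M[R]_(m, n) :=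
  \matrix_(i < m, j < n) 'D_(delta_mx 0 j) (fun y => F y t 0 i) x.

Definition dtF (x : 'rV[R]_n) (t : R) : 'cV[R]_m :=
  \col_(i < m) 'D_1 (fun s : R => F x s 0 i) t.

Definition SingFt (t : R) (x : 'rV[R]_n) : bool := (\rank (JxF t x) < m)%N.

(* Jacobian of Ftilde(x,t) = (F(x,t), t) : R^(n+1) -> R^(m+1) *)
Definition JFtilde (x : 'rV[R]_n) (t : R) : 'M[R]_(m + 1, n + 1) :=
  block_mx (JxF t x) (dtF x t) 0 1%:M.

Definition SingFtilde (x : 'rV[R]_n) (t : R) : bool :=
  (\rank (JFtilde x t) < m + 1)%N.

Definition nuF (t : R) (x : 'rV[R]_n) : R :=
  inf [set enorm (a *m JxF t x) | a in [set a : 'rV[R]_m | enorm a = 1]].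

(* Tangent space at (x,t,s) of pi^{-1}(t) cap X, X = {f_i(x,t) = s_i^L},
   as a subspace of R^n x R x R^m (coordinates ordered x, t, s):
   kernel of the differential of (x,t,s) |-> (F(x,t) - s^L, t). *)
Definition tangent_fibre (L : nat) (x : 'rV[R]_n) (t : R) (s : 'rV[R]_m)
    : 'M[R]_(n + 1 + m) :=
  kermx (col_mx
    (col_mx (row_mx (JxF t x)^T (0 : 'M[R]_(n, 1)))
            (row_mx (dtF x t)^T (1%:M : 'M[R]_1)))
    (row_mx (- (L%:R) *: diag_mx (map_mx (fun a => a ^+ L.-1) s))
            (0 : 'M[R]_(m, 1)))).
End Map.

(* orthogonal projection matrix onto the row space of U; the Grassmannian
   topology is the one induced by U |-> orthoproj U *)
Definition orthoproj (N k : nat) (U : 'M[R]_(k, N)) : 'M[R]_N :=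
  let B := row_base U in (B^T *m invmx (B *m B^T)) *m B.

(* the subspace A x {0} x R^m of R^n x R x R^m *)
Definition embedA (n m : nat) (A : 'M[R]_n) : 'M[R]_(n + m, n + 1 + m) :=
  col_mx (row_mx (row_mx A (0 : 'M[R]_(n, 1))) (0 : 'M[R]_(n, m)))
         (row_mx (0 : 'M[R]_(m, n + 1)) (1%:M : 'M[R]_m)).

End Defs.

(* Main.v *)
Require Import Defs.
From HB Require Import structures.
From mathcomp Require Import all_boot all_order all_algebra.
From mathcomp Require Import all_classical all_reals all_analysis.
Import Order.TTheory GRing.Theory Num.Theory.
Import numFieldNormedType.Exports.
Local Open Scope classical_set_scope.
Local Open Scope ring_scope.
From mathcomp Require Import lra.


Module Helpers.
Set Implicit Arguments. Unset Strict Implicit. Unset Printing Implicit Defensive.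

Section LA.
Variable R : realType.

Lemma rv_sq_eq0 N (w : 'rV[R]_N) : (w *m w^T) 0 0 = 0 -> w = 0.
Proof.
rewrite mxE (eq_bigr (fun j => w 0 j ^+ 2)); last by move=> j _; rewrite mxE expr2.
move/eqP; rewrite psumr_eq0; last by move=> j _; exact: sqr_ge0.
move/allP => H; apply/rowP => j; rewrite mxE.
by have /implyP := H j (mem_index_enum j); rewrite sqrf_eq0 => /(_ isT) /eqP.
Qed.

Lemma gram_unit p N (B : 'M[R]_(p,N)) : row_free B -> B *m B^T \in unitmx.
Proof.
move=> fB; rewrite -row_free_unit -kermx_eq0; apply/eqP.
set K := kermx _; apply/row_matrixP => i; rewrite row0.
have h : row i K *m (B *m B^T) = 0 by rewrite -row_mul mulmx_ker row0.
have : row i K *m B = 0.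
  apply: rv_sq_eq0.
  by rewrite trmx_mul !mulmxA -(mulmxA (row i K)) h mul0mx mxE.
by move=> h2; apply: (row_free_inj fB); rewrite h2 mul0mx.
Qed.

Lemma orthoprojE N k (U : 'M[R]_(k, N)) : orthoproj U =
  (row_base U)^T *m invmx (row_base U *m (row_base U)^T) *m row_base U.
Proof. by []. Qed.

Lemma gram_id r N (B : 'M[R]_(r,N)) : B *m B^T \in unitmx ->
  B *m (B^T *m invmx (B *m B^T) *m B) = B.
Proof. by move=> Bu; rewrite !mulmxA mulmxV ?mul1mx. Qed.

Lemma gram_id2 r N (B : 'M[R]_(r,N)) : B *m B^T \in unitmx ->
  (B^T *m invmx (B *m B^T) *m B) *m B^T = B^T.
Proof. by move=> Bu; rewrite -!mulmxA mulVmx ?mulmx1. Qed.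

Lemma orthoproj_id N k p (U : 'M[R]_(k, N)) (u : 'M[R]_(p, N)) :
  (u <= U)%MS -> u *m orthoproj U = u.
Proof.
move=> uU; have : (u <= row_base U)%MS by rewrite eq_row_base.
case/submxP => y ->; rewrite orthoprojE.
have Bu := gram_unit (row_base_free U).
move: Bu; set B := row_base U => Bu.
by rewrite -(mulmxA y) gram_id.
Qed.

Lemma orthoproj_sub N k (U : 'M[R]_(k, N)) : (orthoproj U <= U)%MS.
Proof.
by apply: (submx_trans (submxMl _ _)); rewrite eq_row_base.
Qed.

Lemma orthoproj_perp N k (U : 'M[R]_(k, N)) (z : 'cV[R]_N) :
  U *m z = 0 -> z^T *m orthoproj U = 0.
Proof.
move=> Uz; have : (row_base U <= U)%MS by rewrite eq_row_base.
case/submxP => D hD; move: hD; set B := row_base U => hD.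
have Bz : B *m z = 0 by rewrite hD -mulmxA Uz mulmx0.
by rewrite orthoprojE !mulmxA -trmx_mul Bz trmx0 !mul0mx.
Qed.

Lemma orthoproj_perp_inv N k (U : 'M[R]_(k, N)) (z : 'cV[R]_N) :
  z^T *m orthoproj U = 0 -> U *m z = 0.
Proof.
move=> h.
have h2 : z^T *m (row_base U)^T = 0.
  have Bu := gram_unit (row_base_free U).
  move: h Bu; rewrite orthoprojE; set B := row_base U => h Bu.
  have := congr1 (mulmx^~ B^T) h; rewrite mul0mx /=.
  by rewrite -(mulmxA z^T) gram_id2.
have Bz : row_base U *m z = 0.
  by apply: trmx_inj; rewrite trmx_mul h2 trmx0.
have : (U <= row_base U)%MS by rewrite eq_row_base.
by case/submxP => D ->; rewrite -mulmxA Bz mulmx0.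
Qed.


Definition etv n m : 'cV[R]_(n+1+m) :=
  col_mx (col_mx (0 : 'cV[R]_n) (1%:M : 'M[R]_1)) (0 : 'cV[R]_m).
Definition Semb n m : 'M[R]_(m, n+1+m) := row_mx (0 : 'M[R]_(m,n+1)) 1%:M.
Definition Xemb n m : 'M[R]_(n, n+1+m) :=
  row_mx (row_mx (1%:M : 'M[R]_n) (0 : 'M[R]_(n,1))) (0 : 'M[R]_(n,m)).

Lemma colM n m (A : 'M[R]_(n,m)) (B : 'M[R]_(1,m)) (C : 'M[R]_(m,m)) :
  col_mx (col_mx (row_mx A (0 : 'M[R]_(n,1))) (row_mx B (1%:M : 'M[R]_1)))
     (row_mx C (0 : 'M[R]_(m,1))) *m col_mx (0 : 'cV[R]_m) (1%:M : 'M[R]_1) = etv n m.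
Proof.
by rewrite !mul_col_mx !mul_row_col !mulmx0 !mul0mx !mulmx1 !add0r.
Qed.

Lemma tangent_et n m (F : 'rV[R]_n -> R -> 'rV[R]_m) L x t s :
  tangent_fibre F L x t s *m etv n m = 0.
Proof.
rewrite /tangent_fibre; set M := col_mx _ _.
have -> : etv n m = M *m col_mx (0 : 'cV[R]_m) (1%:M : 'M[R]_1) by rewrite colM.
by rewrite mulmxA mulmx_ker mul0mx.
Qed.

Lemma T_decomp p n m (T : 'M[R]_(p, n+1+m)) : T *m etv n m = 0 ->
  T = row_mx (row_mx (lsubmx (lsubmx T)) 0) (rsubmx T).
Proof.
move=> h; have hb : rsubmx (lsubmx T) = 0.
  move: h; rewrite -{1}(hsubmxK T) -{1}(hsubmxK (lsubmx T)) /etv.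
  by rewrite !mul_row_col !mulmx0 mulmx1 addr0 add0r.
by rewrite -hb !hsubmxK.
Qed.

Lemma final_assembly n m (T : 'M[R]_(n+1+m)) :
  (m <= n)%N -> \rank T = n -> T *m etv n m = 0 -> (Semb n m <= T)%MS ->
  exists A : 'M[R]_n, \rank A = (n - m)%N /\ (T == embedA m A)%MS.
Proof.
move=> mn rT hz hs.
set T1 := lsubmx (lsubmx T); set T3 := rsubmx T.
have hT : T = T1 *m Xemb n m + T3 *m Semb n m.
  rewrite {1}(T_decomp hz) /Xemb /Semb !mul_mx_row !mulmx1 !mulmx0.
  by rewrite -[in row_mx 0 T3]row_mx0 !add_row_mx !addr0 !add0r.
pose A := (<<T1>>%MS : 'M[R]_n).
have hE : embedA m A = col_mx (A *m Xemb n m) (Semb n m).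
  by rewrite /embedA /Xemb !mul_mx_row !mulmx1 !mulmx0.
have AT1 : (A :=: T1)%MS by exact: genmxE.
have hTE : (T == embedA m A)%MS.
  apply/andP; split.
    rewrite hE -addsmxE {1}hT; apply: addmx_sub.
      by apply: submx_trans (addsmxSl _ _); apply: submxMr; rewrite AT1.
    by apply: submx_trans (addsmxSr _ _); apply: submxMl.
  rewrite hE col_mx_sub hs andbT.
  have -> : A *m Xemb n m = (A *m pinvmx T1) *m (T1 *m Xemb n m).
    by rewrite mulmxA mulmxKpV // AT1.
  apply: submx_trans (submxMl _ _) _.
  have -> : T1 *m Xemb n m = T - T3 *m Semb n m by rewrite {1}hT addrK.
  apply: addmx_sub => //; rewrite eqmx_opp.
  exact: submx_trans (submxMl _ _) hs.
exists A; split => //.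
have := eqmx_rank hTE; rewrite rT hE.
have -> : col_mx (A *m Xemb n m) (Semb n m) =
   block_mx (row_mx A (0 : 'M[R]_(n,1))) 0 0 (1%:M : 'M[R]_m).
  by rewrite /Xemb /Semb !mul_mx_row !mulmx1 !mulmx0.
rewrite rank_diag_block_mx rank_row_mx0 mxrank1 => h.
by rewrite [X in (X - m)%N]h addnK.
Qed.

End LA.


Section AN.
Variable R : realType.

Lemma cvg_entry p q (M : nat -> 'M[R]_(p,q)) (M0 : 'M[R]_(p,q)) : M @ \oo --> M0 ->
  forall i j, (fun k => M k i j) @ \oo --> M0 i j.
Proof. by move=> h i j; exact: (cvg_comp _ _ h (@coord_continuous _ p q i j M0)). Qed.

Lemma cvg_sumf (I : finType) (f : I -> nat -> R) (a : I -> R) :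
  (forall i, f i @ \oo --> a i) ->
  (fun k => \sum_i f i k) @ \oo --> \sum_i a i.
Proof.
move=> h; apply: cvg_big => //; exact: add_continuous.
Qed.

Lemma cvg_mul_entry p q r (A : nat -> 'M[R]_(p,q)) (B : nat -> 'M[R]_(q,r)) (a : 'M[R]_(p,q)) (b : 'M[R]_(q,r)) :
  (forall i j, (fun k => A k i j) @ \oo --> a i j) ->
  (forall i j, (fun k => B k i j) @ \oo --> b i j) ->
  forall i j, (fun k => (A k *m B k) i j) @ \oo --> (a *m b) i j.
Proof.
move=> hA hB i j; rewrite mxE; under eq_cvg do rewrite mxE.
by apply: cvg_sumf => l; apply: cvgM.
Qed.

Lemma enorm_ge0 N (v : 'rV[R]_N) : 0 <= enorm v.
Proof. exact: sqrtr_ge0. Qed.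

Lemma sumsq_ge0 N (v : 'rV[R]_N) : 0 <= \sum_i v 0 i ^+ 2.
Proof. by apply: sumr_ge0 => i _; exact: sqr_ge0. Qed.

Lemma enorm_sq N (v : 'rV[R]_N) : enorm v ^+ 2 = (v *m v^T) 0 0.
Proof.
rewrite /enorm sqr_sqrtr ?sumsq_ge0 // mxE.
by apply: eq_bigr => i _; rewrite mxE expr2.
Qed.

Lemma enorm_coord N (v : 'rV[R]_N) i : `|v 0 i| <= enorm v.
Proof.
rewrite /enorm -sqrtr_sqr ler_sqrt; last exact: sumsq_ge0.
rewrite (bigD1 i) //= lerDl; apply: sumr_ge0 => l _; exact: sqr_ge0.
Qed.

Lemma enormZ N (c : R) (v : 'rV[R]_N) : enorm (c *: v) = `|c| * enorm v.
Proof.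
rewrite /enorm (eq_bigr (fun i => c ^+ 2 * v 0 i ^+ 2)); last first.
  by move=> i _; rewrite mxE exprMn.
by rewrite -mulr_sumr sqrtrM ?sqr_ge0 // sqrtr_sqr.
Qed.

Lemma enorm_eq0 N (v : 'rV[R]_N) : enorm v = 0 -> v = 0.
Proof. by move=> h; apply: rv_sq_eq0; rewrite -enorm_sq h expr0n. Qed.

Lemma enorm_cvg0 N (u : nat -> 'rV[R]_N) : u @ \oo --> (0 : 'rV[R]_N) ->
  (fun k => enorm (u k)) @ \oo --> 0.
Proof.
move=> h.
have hs : (fun k => \sum_i u k 0 i ^+ 2) @ \oo --> \sum_(i < N) (0:R) ^+ 2.
  apply: cvg_sumf => i; rewrite expr2; under eq_cvg do rewrite expr2.
  have := @cvg_entry 1 N u 0 h 0 i; rewrite mxE => hi.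
  exact: cvgM.
move: hs; rewrite expr0n /= big1 // => hs.
rewrite -sqrtr0; exact: (cvg_comp _ _ hs (@sqrt_continuous R 0)).
Qed.

Lemma nu_inf_le n m (J : 'M[R]_(m,n)) (a : 'rV[R]_m) :
  inf [set enorm (b *m J) | b in [set b : 'rV[R]_m | enorm b = 1]] * enorm a
  <= enorm (a *m J).
Proof.
have [->|a0] := eqVneq a 0.
  by rewrite mul0mx /enorm big1 ?sqrtr0 ?mulr0 // => i _; rewrite mxE expr0n.
have ea : 0 < enorm a.
  rewrite lt_def enorm_ge0 andbT; apply/eqP => /enorm_eq0 h.
  by rewrite h eqxx in a0.
rewrite -ler_pdivlMr //.
have hlb : has_lbound [set enorm (b *m J) | b in [set b : 'rV[R]_m | enorm b = 1]].
  by exists 0 => _ [b _ <-]; exact: enorm_ge0.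
apply: (ge_inf hlb); exists ((enorm a)^-1 *: a).
  by rewrite /= enormZ ger0_norm ?invr_ge0 ?enorm_ge0 // mulVf // gt_eqF.
by rewrite -scalemxAl enormZ ger0_norm ?invr_ge0 ?enorm_ge0 // mulrC.
Qed.

End AN.


Section PT.
Variable R : realType.

Lemma ker_vec n m (F : 'rV[R]_n -> R -> 'rV[R]_m) L x t (s : 'rV[R]_m) (j : 'I_m) :
  JxF F t x *m (JxF F t x)^T \in unitmx ->
  ((row_mx (0 : 'rV[R]_(n+1)) (delta_mx 0 j) +
   ((L%:R * s 0 j ^+ L.-1) *: ((delta_mx 0 j : 'rV[R]_m) *m invmx (JxF F t x *m (JxF F t x)^T)
      *m JxF F t x)) *m Xemb R n m)%R <= tangent_fibre F L x t s)%MS.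
Proof.
move=> Gu; rewrite /tangent_fibre; apply/sub_kermxP; set M := col_mx _ _.
have hX : Xemb R n m *m M = row_mx (JxF F t x)^T 0.
  by rewrite /M /Xemb !mul_row_col !mul1mx !mul0mx !addr0.
rewrite mulmxDl -(mulmxA _ (Xemb R n m)) hX {hX} /M mul_row_col mul0mx add0r.
rewrite !mul_mx_row !mulmx0 add_row_mx addr0.
set c := (L%:R * s 0 j ^+ L.-1).
rewrite -scalemxAr -scalemxAl -!mulmxA mulVmx // mulmx1 -rowE row_diag_mx mxE.
by rewrite scalerA -scalerDl /c mulNr addNr scale0r row_mx0.
Qed.


Lemma pt_bound n m (J : 'M[R]_(m,n)) (j : 'I_m) (s Fv : 'rV[R]_m) (L : nat)
    (theta C : R) :
  J *m J^T \in unitmx -> (2 <= L)%N -> 0 < theta -> 0 < C ->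
  Fv 0 j = s 0 j ^+ L ->
  enorm Fv `^ theta <=
    C * inf [set enorm (b *m J) | b in [set b : 'rV[R]_m | enorm b = 1]] ->
  forall r, `| ((L%:R * s 0 j ^+ L.-1) *: ((delta_mx 0 j : 'rV[R]_m) *m
      invmx (J *m J^T) *m J)) 0 r|
     <= L%:R * C * `|s 0 j| `^ ((L%:R - 1) - L%:R * theta).
Proof.
move=> Gu L2 th0 C0 hF hgr r.
set nu := inf _ in hgr.
have hnu : forall a', nu * enorm a' <= enorm (a' *m J) := fun a' => nu_inf_le J a'.
set a := (delta_mx 0 j : 'rV[R]_m) *m invmx (J *m J^T).
set b := a *m J.
have hb2 : enorm b ^+ 2 = a 0 j.
  rewrite enorm_sq /b trmx_mul mulmxA -(mulmxA a J) /a.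
  rewrite -(mulmxA _ (invmx _)) mulVmx // mulmx1 -rowE !mxE //.
have hs : `|s 0 j| ^+ L <= enorm Fv by rewrite -normrX -hF enorm_coord.
apply: le_trans (enorm_coord _ r) _.
rewrite enormZ normrM normrX (ger0_norm (ler0n _ L)).
set sg := `|s 0 j|.
have sg0 : 0 <= sg by exact: normr_ge0.
have eb0 : 0 <= enorm b by exact: enorm_ge0.
have L0 : (0 : R) <= L%:R by exact: ler0n.
have [sgz|sgp] := eqVneq sg 0.
  rewrite sgz expr0n /=.
  have -> : (L.-1 == 0%N) = false by move: L2; case: (L) => [|[|]].
  rewrite mulr0 mul0r; apply: mulr_ge0; [apply: mulr_ge0 => //; exact: ltW | exact: powR_ge0].
have sgpos : 0 < sg by rewrite lt_def sgp sg0.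
have Fp : 0 < enorm Fv by apply: lt_le_trans hs; exact: exprn_gt0.
set p := sg `^ (L%:R * theta).
have pp : 0 < p by exact: powR_gt0.
have hp : p <= C * nu.
  apply: le_trans hgr; rewrite /p powRrM powR_mulrn //.
  apply: ge0_ler_powR => //; first exact: ltW.
  - by rewrite nnegrE exprn_ge0.
  - by rewrite nnegrE enorm_ge0.
have nup : 0 < nu.
  by have := lt_le_trans pp hp; rewrite pmulr_rgt0.
have heb : nu * enorm b <= 1.
  have h1 := hnu a.
  have h2 : enorm b ^+ 2 <= enorm a.
    by rewrite hb2; apply: le_trans (enorm_coord a j); exact: ler_norm.
  have [eb_z|ebp] := eqVneq (enorm b) 0; first by rewrite eb_z mulr0.
  have ebpos : 0 < enorm b by rewrite lt_def ebp eb0.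
  have h3 : nu * enorm b ^+ 2 <= enorm b.
    by apply: le_trans h1; apply: ler_wpM2l => //; exact: ltW.
  by rewrite -(ler_pM2r ebpos) mul1r -mulrA -expr2.
have ebp : enorm b * p <= C.
  apply: (le_trans (ler_wpM2l eb0 hp)).
  rewrite mulrCA (mulrC (enorm b)) -[X in _ <= X]mulr1.
  by rewrite ler_wpM2l // ltW.
have -> : (L%:R - 1) - L%:R * theta = (L.-1)%:R - L%:R * theta :> R.
  by rewrite -subn1 natrB //; move: L2; case: (L).
rewrite powRB; last by rewrite sgp implybT.
rewrite powR_mulrn // -/p mulrA ler_pdivlMr //.
have q0 : 0 <= L%:R * sg ^+ L.-1 by rewrite mulr_ge0 ?exprn_ge0.
rewrite -(mulrA _ (enorm b) p) [X in _ <= X]mulrAC; exact: ler_wpM2l.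
Qed.


Lemma rowfree_J n m (F : 'rV[R]_n -> R -> 'rV[R]_m) x t :
  ~~ SingFtilde F x t -> row_free (JxF F t x).
Proof.
rewrite /SingFtilde -leqNgt => h.
have fT : row_free (JFtilde F x t).
  by rewrite /row_free eqn_leq rank_leq_row h.
rewrite -kermx_eq0; apply/eqP.
set K := kermx (JxF F t x).
set W := row_mx K (- (K *m dtF F x t)).
have hW : W *m JFtilde F x t = 0.
  rewrite /W /JFtilde mul_row_block /K mulmx_ker !mulmx0 addr0 mulmx1 addrN.
  by rewrite row_mx0.
have : W = 0 by apply: (row_free_inj fT); rewrite hW mul0mx.
by move/eqP; rewrite row_mx_eq0 => /andP[/eqP].
Qed.

End PT.


Lemma zm_id (V : zmodType) (x e a b : V) : x + a = e + b -> x - e = - a + b.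
Proof.
move=> h; have -> : x = e + b - a by rewrite -h addrK.
by rewrite addrAC (addrC e) addrK addrC.
Qed.

Lemma L2_of (R : realType) (L : nat) (theta : R) :
  0 < theta -> theta < (L%:R - 1) / L%:R -> (2 <= L)%N.
Proof.
move=> th0; case: L => [|[|l]] //=.
- by rewrite invr0 mulr0 => h; have := lt_trans th0 h; rewrite ltxx.
- by rewrite subrr mul0r => h; have := lt_trans th0 h; rewrite ltxx.
Qed.


End Helpers.
Import Helpers.

Theorem lemma3p4 (R : realType) (n m : nat) (F : 'rV[R]_n -> R -> 'rV[R]_m)
  (U : set 'rV[R]_(n + 1)) (theta : R) (L : nat)
  (x0 : 'rV[R]_n) (xs : nat -> 'rV[R]_n) (ts : nat -> R) (ss : nat -> 'rV[R]_m)
  (T : 'M[R]_(n + 1 + m)) :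
  (m <= n)%N -> (2 <= m)%N ->
  (* F is an analytic germ at 0 with F(0) = 0 *)
  open U -> U (xt 0 0) ->
  (forall i : 'I_m, analytic_on U (fun z : 'rV[R]_(n + 1) =>
       F (lsubmx z) (rsubmx z 0 0) 0 i)) ->
  F 0 0 = 0 ->
  (* the gradient inequality with exponent theta *)
  0 < theta -> theta < 1 ->
  (forall y0 : 'rV[R]_n, U (xt y0 0) -> F y0 0 = 0 -> SingFt F 0 y0 ->
     y0 != 0 ->
     exists c : R, 0 < c /\ exists delta : R, 0 < delta /\
       forall (x : 'rV[R]_n) (t : R), enorm (x - y0) < delta -> `|t| < delta ->
         ~~ SingFtilde F x t -> (enorm (F x t)) `^ theta <= c * nuF F t x) ->
  theta < (L%:R - 1) / L%:R ->
  (* the point x0 *)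
  U (xt x0 0) -> F x0 0 = 0 -> SingFt F 0 x0 -> x0 != 0 ->
  (* the sequence in X *)
  (forall k (i : 'I_m), F (xs k) (ts k) 0 i = ss k 0 i ^+ L) ->
  (forall k, ~~ SingFtilde F (xs k) (ts k)) ->
  xs @ \oo --> x0 -> ts @ \oo --> (0 : R) -> ss @ \oo --> (0 : 'rV[R]_m) ->
  (* convergence of the tangent spaces in the Grassmannian G(n, n+1+m) *)
  \rank T = n ->
  (fun k => orthoproj (tangent_fibre F L (xs k) (ts k) (ss k))) @ \oo
     --> orthoproj T ->
  exists A : 'M[R]_n, \rank A = (n - m)%N /\ (T == embedA m A)%MS.
Proof.
move=> mn m2 oU U0 an F00 th0 th1 hgrad hL Ux0 Fx0 Sx0 x0n hX hS hx ht hs rT hP.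
have L2 := @L2_of R L theta th0 hL.
set P := orthoproj T in hP *.
set Pk := fun k => orthoproj (tangent_fibre F L (xs k) (ts k) (ss k)).
have hPe : forall i j, (fun k => Pk k i j) @ \oo --> P i j := cvg_entry hP.
have hz : T *m etv R n m = 0.
  apply: orthoproj_perp_inv; apply/rowP => c.
  have h1 : (fun k => ((etv R n m)^T *m Pk k) 0 c) @ \oo -->
            ((etv R n m)^T *m P) 0 c.
    apply: (@cvg_mul_entry R _ _ _ (fun _ => (etv R n m)^T)) => [i j|]; last exact: hPe.
    exact: cvg_cst.
  have h0 : forall k, ((etv R n m)^T *m Pk k) 0 c = 0.
    by move=> k; rewrite /Pk orthoproj_perp ?tangent_et // mxE.
  have h2 : (fun k => ((etv R n m)^T *m Pk k) 0 c) @ \oo --> (0:R).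
    by under eq_cvg do rewrite h0; exact: cvg_cst.
  rewrite [RHS]mxE; exact: (cvg_unique _ h1 h2).
have hsT : (Semb R n m <= T)%MS.
  apply/row_subP => j.
  have -> : row j (Semb R n m) = row_mx (0 : 'rV[R]_(n+1)) (delta_mx 0 j).
    by rewrite /Semb row_row_mx row0 row1.
  set e := row_mx _ _.
  suff he : e *m P = e.
    by rewrite -he; apply: submx_trans (submxMl _ _) (orthoproj_sub T).
  pose J k := JxF F (ts k) (xs k).
  have Gu : forall k, J k *m (J k)^T \in unitmx.
    by move=> k; apply: gram_unit; apply: rowfree_J; exact: hS.
  pose v k := (L%:R * ss k 0 j ^+ L.-1) *:
    ((delta_mx 0 j : 'rV[R]_m) *m invmx (J k *m (J k)^T) *m J k).
  have hid : forall k, e *m Pk k - e = (- (v k *m Xemb R n m)) *m (Pk k - 1%:M).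
    move=> k; rewrite mulmxBr mulmx1 mulNmx opprK; apply: zm_id.
    rewrite -mulmxDl /Pk; apply: orthoproj_id; rewrite /e /v; apply: ker_vec; exact: Gu.
  have hv : forall i l, (fun k => v k i l) @ \oo --> (0:R).
    move=> i l; rewrite (ord1 i).
    have [C [C0 [d [d0 hd]]]] := hgrad x0 Ux0 Fx0 Sx0 x0n.
    set al := (L%:R - 1) - L%:R * theta.
    have Lp : (0:R) < L%:R by rewrite ltr0n; move: L2; case: (L).
    have al0 : 0 < al.
      have := hL; rewrite ltr_pdivlMr // => h.
      rewrite /al; lra.
    apply/cvgr0Pnorm_lt => eps eps0.
    have LC : 0 < L%:R * C by rewrite mulr_gt0.
    set eta := (eps / (L%:R * C)) `^ al^-1.
    have eta0 : 0 < eta by rewrite powR_gt0 // divr_gt0.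
    have Hx : \forall k \near \oo, enorm (xs k - x0) < d.
      have : (fun k => xs k - x0) @ \oo --> (0 : 'rV[R]_n).
        rewrite -(subrr x0); exact: (cvgB hx (cvg_cst _)).
      move/enorm_cvg0/cvgr0Pnorm_lt/(_ d d0).
      by apply: filterS => k; rewrite ger0_norm ?enorm_ge0.
    have Ht : \forall k \near \oo, `|ts k| < d.
      by move/cvgr0Pnorm_lt: ht => /(_ d d0).
    have Hs : \forall k \near \oo, `|ss k 0 j| < eta.
      have := @cvg_entry R 1 m ss 0 hs 0 j; rewrite mxE.
      by move/cvgr0Pnorm_lt => /(_ eta eta0).
    apply: filterS (filterI Hx (filterI Ht Hs)) => k [hxk [htk hsk]].
    have hb := pt_bound (Gu k) L2 th0 C0 (hX k j) (hd _ _ hxk htk (hS k)) l.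
    rewrite /v; apply: le_lt_trans hb _.
    have h1 : `|ss k 0 j| `^ al < eta `^ al.
      apply: gt0_ltr_powR => //; rewrite nnegrE ?normr_ge0 //; exact: ltW.
    have h2 : eta `^ al = eps / (L%:R * C).
      rewrite /eta -powRrM mulVf ?gt_eqF // powRr1 //; apply: ltW.
      by rewrite divr_gt0.
    rewrite h2 in h1.
    rewrite (_ : eps = L%:R * C * (eps / (L%:R * C))); last first.
      by rewrite mulrCA mulfV ?mulr1 // gt_eqF.
    by rewrite ltr_pM2l.
  apply/rowP => c.
  have h1 : (fun k => (e *m Pk k) 0 c) @ \oo --> (e *m P) 0 c.
    apply: (@cvg_mul_entry R _ _ _ (fun _ => e)) => [i l|]; last exact: hPe.
    exact: cvg_cst.
  have hw : forall i l, (fun k => (- (v k *m Xemb R n m)) i l) @ \oo -->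
      (0 : 'M[R]_(1, n+1+m)) i l.
    move=> i l.
    have E : (fun k => (- (v k *m Xemb R n m)) i l) =1
             (fun k => - ((v k *m Xemb R n m) i l)) by move=> k; rewrite !mxE.
    rewrite (@eq_cvg _ _ _ _ _ _ E) (_ : (0 : 'M[R]_(1, n+1+m)) i l = - ((0 : 'M[R]_(1, n+1+m)) i l));
      last by rewrite !mxE oppr0.
    apply: cvgN.
    have := @cvg_mul_entry R _ _ _ v (fun _ => Xemb R n m) 0 (Xemb R n m) _ _ i l.
    rewrite mul0mx mxE; apply.
    - by move=> i' l'; rewrite mxE; exact: hv.
    - by move=> i' l'; exact: cvg_cst.
  have hB : forall i l, (fun k => (Pk k - 1%:M) i l) @ \oo --> (P - 1%:M) i l.
    move=> i l.
    have E : (fun k => (Pk k - 1%:M) i l) =1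
             (fun k => Pk k i l - (1%:M : 'M[R]_(n+1+m)) i l).
      by move=> k; rewrite !mxE.
    rewrite (@eq_cvg _ _ _ _ _ _ E) (_ : (P - 1%:M) i l = P i l - (1%:M : 'M[R]_(n+1+m)) i l);
      last by rewrite !mxE.
    exact: (cvgB (hPe i l) (cvg_cst _)).
  have eqf : forall k, (e *m Pk k) 0 c - e 0 c =
      ((- (v k *m Xemb R n m)) *m (Pk k - 1%:M)) 0 c.
    move=> k; have := congr1 (fun M : 'M[R]_(1, n+1+m) => M 0 c) (hid k); move=> /= <-.
    by rewrite [RHS]mxE [X in _ = _ + X]mxE.
  have h2 : (fun k => (e *m Pk k) 0 c - e 0 c) @ \oo --> (0:R).
    have := @cvg_mul_entry R 1 (n+1+m) (n+1+m) (fun k => - (v k *m Xemb R n m)) (fun k => Pk k - 1%:M) 0 (P - 1%:M) hw hB 0 c; rewrite mul0mx mxE => H.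
    by under eq_cvg do rewrite eqf; exact: H.
  have h3 : (fun k => (e *m Pk k) 0 c - e 0 c) @ \oo --> (e *m P) 0 c - e 0 c.
    exact: (cvgB h1 (cvg_cst _)).
  have := @cvg_unique _ (@Rhausdorff R) _ _ _ _ h3 h2.
  by move=> h; apply/eqP; rewrite -subr_eq0 h.
exact: final_assembly mn rT hz hsT.
Qed.
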